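(* Let $N\ge 2$, let $\{u_j\}_{j=1}^{N-1}$ and $\{v_j\}_{j=1}^{N-1}$ be sequences of positive real numbers related through $v_j=\frac{1}{u_{N-j}}$ for $j=1,\dots,N-1$, let $H\in\mathbb{R}^{(N-1)\times(N-1)}$ be lower triangular, and let $\tau>0$. Then the following are equivalent: (a) (primal Lyapunov condition) For the algorithm with H-matrix $H$ and the sequence $\{u_j\}$, the quantity $U_N-\tau\|\tilde{A}x_N\|^2-\langle \tilde{A}x_N, x_N-y_0\rangle$, written as a vector quadratic form in $\tilde{A}x_1,\dots,\tilde{A}x_N$, is nonnegative for all values of $\tilde{A}x_1,\dots,\tilde{A}x_N\in\mathbb{R}^d$; i.e. $\tau\|\tilde{A}x_N\|^2+\langle \tilde{A}x_N, x_N-y_0\rangle\le U_N$ holds identically. (b) (dual Lyapunov condition) For the algorithm with H-matrix $H^{\mathrm{A}}$ (the anti-diagonal transpose of $H$, $(H^{\mathrm{A}})_{k,j}=H_{N-j,N-k}$) and the sequence $\{v_j\}$, the quantity $-V_0-\tau\|\tilde{A}x_N\|^2-\langle \tilde{A}x_N, x_N-y_0\rangle$, written as a vector quadratic form in $\tilde{A}x_1,\dots,\tilde{A}x_N$, is nonnegative for all values of $\tilde{A}x_1,\dots,\tilde{A}x_N\in\mathbb{R}^d$; i.e. $V_0\le -\tau\|\tilde{A}x_N\|^2-\langle \tilde{A}x_N, x_N-y_0\rangle$ holds identically.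
   Context: Let $T\colon\mathbb{R}^d\to\mathbb{R}^d$ be nonexpansive and $A=2(I+T)^{-1}-I$ the associated maximally monotone operator, so $T=2J_A-I$ with resolvent $J_A=(I+A)^{-1}$. A fixed-point algorithm with lower-triangular H-matrix $H=(h_{k,j})\in\mathbb{R}^{(N-1)\times(N-1)}$ is $y_{k+1}=y_k-\sum_{j=0}^{k}h_{k+1,j+1}(y_j-Ty_j)$ for $k=0,\dots,N-2$. Set $x_{k+1}=J_A(y_k)$ for $k=0,\dots,N-1$ and $\tilde{A}x_{k+1}=y_k-x_{k+1}\in A x_{k+1}$, so that $y_j-Ty_j=2\tilde{A}x_{j+1}$ and $\|y_{N-1}-Ty_{N-1}\|^2=4\|\tilde{A}x_N\|^2$. Using these relations, all of $x_1,\dots,x_N$, $y_1,\dots,y_{N-1}$ and $x_N-y_0$ are linear combinations of $\tilde{A}x_1,\dots,\tilde{A}x_N$ (and $y_0$ cancels in differences), so the expressions in the claim are vector quadratic forms $\sum_{i,j}s_{i,j}\langle g_i,g_j\rangle$ in $g_k=\tilde{A}x_k$, whose coefficients depend on the H-matrix, the weights, and $\tau$. Primal Lyapunov sequence: $U_1=0$, $U_{j+1}=U_j-u_j\langle x_{j+1}-x_j,\tilde{A}x_{j+1}-\tilde{A}x_j\rangle$ for $j=1,\dots,N-1$. Dual Lyapunov sequence: $V_{N-1}=0$, $V_j=V_{j+1}+v_{j+1}\langle x_N-x_{j+1},\tilde{A}x_N-\tilde{A}x_{j+1}\rangle$ for $j=0,\dots,N-2$. By monotonicity, $U_j$ is nonincreasing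 and $V_j$ is nonincreasing, so either condition yields $\|\tilde{A}x_N\|^2\le \|y_0-y_\star\|^2/\tau^2$ for $y_\star\in\mathrm{Fix}\,T$. *)

(* Defs.v *)
From HB Require Import structures.
From mathcomp Require Import all_boot all_order all_algebra.
Set Implicit Arguments. Unset Strict Implicit. Unset Printing Implicit Defensive.
Import Order.TTheory GRing.Theory Num.Theory.
Local Open Scope ring_scope.

Section FixedPoint.
Variable R : realFieldType.
Variable d : nat.
Notation vec := 'rV[R]_d.

Definition dot (a b : vec) : R := \sum_(i < d) a 0 i * b 0 i.

(* 0-based access to an n x n matrix by natural-number indices
   (0 outside the range); H is stored 0-based, so the paper's
   h_{k,j} (1-based) is  entry H (k-1) (j-1). *)
Definition entry (n : nat) (H : 'M[R]_n) (i j : nat) : R :=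
  match @insub _ (fun k => (k < n)%N) 'I_n i, @insub _ (fun k => (k < n)%N) 'I_n j with
  | Some i', Some j' => H i' j'
  | _, _ => 0
  end.

(* Anti-diagonal transpose: (H^A)_{k,j} = H_{N-j,N-k} (1-based, size N-1),
   i.e. 0-based H^A k j = H (rev_ord j) (rev_ord k). *)
Definition antiT (n : nat) (H : 'M[R]_n) : 'M[R]_n :=
  \matrix_(k < n, j < n) H (rev_ord j) (rev_ord k).

(* g k stands for  \tilde A x_k  (k = 1..N).  Using y_j - T y_j = 2 g_{j+1}:
   y_{k+1} = y_k - sum_{j=0}^{k} h_{k+1,j+1} (2 g_{j+1}). *)
Fixpoint yseq (n : nat) (H : 'M[R]_n) (g : nat -> vec) (y0 : vec) (k : nat) : vec :=
  match k with
  | 0 => y0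
  | k'.+1 => yseq H g y0 k' - \sum_(j < k'.+1) (entry H k' j * 2) *: g j.+1
  end.

(* x_k = J_A(y_{k-1}) = y_{k-1} - \tilde A x_k, for k >= 1 *)
Definition xseq (n : nat) (H : 'M[R]_n) (g : nat -> vec) (y0 : vec) (k : nat) : vec :=
  yseq H g y0 k.-1 - g k.

Definition U_N (N : nat) (H : 'M[R]_N.-1) (u : nat -> R) (g : nat -> vec) (y0 : vec) : R :=
  - \sum_(1 <= j < N) u j * dot (xseq H g y0 j.+1 - xseq H g y0 j) (g j.+1 - g j).

Definition V_0 (N : nat) (H : 'M[R]_N.-1) (v : nat -> R) (g : nat -> vec) (y0 : vec) : R :=
  \sum_(0 <= j < N.-1) v j.+1 * dot (xseq H g y0 N - xseq H g y0 j.+1) (g N - g j.+1).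

Definition primal_cond (N : nat) (H : 'M[R]_N.-1) (u : nat -> R) (tau : R) : Prop :=
  forall (g : nat -> vec) (y0 : vec),
    tau * dot (g N) (g N) + dot (g N) (xseq H g y0 N - y0) <= U_N H u g y0.

Definition dual_cond (N : nat) (H : 'M[R]_N.-1) (v : nat -> R) (tau : R) : Prop :=
  forall (g : nat -> vec) (y0 : vec),
    V_0 H v g y0 <= - (tau * dot (g N) (g N)) - dot (g N) (xseq H g y0 N - y0).

End FixedPoint.

(* Main.v *)
Require Import Defs.
From HB Require Import structures.
From mathcomp Require Import all_boot all_order all_algebra.
From mathcomp Require Import ring zify.
Import Order.TTheory GRing.Theory Num.Theory.
Local Open Scope ring_scope.

Set Implicit Arguments. Unset Strict Implicit. Unset Printing Implicit Defensive.

Section Aux.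
Variable R : realFieldType.
Variable d : nat.
Notation vec := 'rV[R]_d.

Lemma dotC (a b : vec) : dot a b = dot b a.
Proof. by rewrite /dot; apply: eq_bigr => i _; rewrite mulrC. Qed.
Lemma dotDl (a b c : vec) : dot (a + b) c = dot a c + dot b c.
Proof. by rewrite /dot -big_split; apply: eq_bigr => i _; rewrite mxE mulrDl. Qed.
Lemma dotZl k (a b : vec) : dot (k *: a) b = k * dot a b.
Proof. by rewrite /dot mulr_sumr; apply: eq_bigr => i _; rewrite mxE mulrA. Qed.
Lemma dotNl (a b : vec) : dot (- a) b = - dot a b.
Proof. by rewrite -scaleN1r dotZl mulN1r. Qed.
Lemma dot0l (b : vec) : dot 0 b = 0.
Proof. by rewrite -(scale0r 0) dotZl mul0r. Qed.
Lemma dotBl (a b c : vec) : dot (a - b) c = dot a c - dot b c.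
Proof. by rewrite dotDl dotNl. Qed.
Lemma dotDr (a b c : vec) : dot c (a + b) = dot c a + dot c b.
Proof. by rewrite dotC dotDl !(dotC c). Qed.
Lemma dotZr k (a b : vec) : dot b (k *: a) = k * dot b a.
Proof. by rewrite dotC dotZl dotC. Qed.
Lemma dotNr (a b : vec) : dot b (- a) = - dot b a.
Proof. by rewrite dotC dotNl dotC. Qed.
Lemma dotBr (a b c : vec) : dot c (a - b) = dot c a - dot c b.
Proof. by rewrite dotDr dotNr. Qed.
Lemma dot_suml I (r : seq I) (P : pred I) (F : I -> vec) b :
  dot (\sum_(i <- r | P i) F i) b = \sum_(i <- r | P i) dot (F i) b.
Proof.
elim: r => [|a r IH]; first by rewrite !big_nil dot0l.
by rewrite !big_cons; case: (P a); rewrite ?dotDl IH.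
Qed.
Lemma dot_sumr I (r : seq I) (P : pred I) (F : I -> vec) b :
  dot b (\sum_(i <- r | P i) F i) = \sum_(i <- r | P i) dot b (F i).
Proof. by rewrite dotC dot_suml; apply: eq_bigr => i _; rewrite dotC. Qed.

Definition Sf n (H : 'M[R]_n) (g : nat -> vec) (i : nat) : vec :=
  \sum_(j < i.+1) (entry H i j * 2) *: g j.+1.

Lemma yseqE n (H : 'M[R]_n) g y0 k :
  yseq H g y0 k = y0 - \sum_(i < k) Sf H g i.
Proof.
elim: k => [|k IH] /=; first by rewrite big_ord0 subr0.
by rewrite IH [in RHS]big_ord_recr /= opprD addrA.
Qed.

Lemma entryE n (H : 'M[R]_n) (i j : 'I_n) : entry H i j = H i j.
Proof. by rewrite /entry !valK. Qed.

Lemma SfE n (H : 'M[R]_n) g (i : 'I_n) :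
  Sf H g i = \sum_(j < n | (j <= i)%N) (H i j * 2) *: g j.+1.
Proof.
rewrite /Sf (big_ord_widen n (fun j => (entry H i j * 2) *: g j.+1) (ltn_ord i)).
apply: eq_big => [j|j _]; first by rewrite ltnS.
by rewrite entryE.
Qed.

End Aux.

Section Primal.
Variable R : realFieldType.
Variable d : nat.
Notation vec := 'rV[R]_d.
Lemma xdiff m (H : 'M[R]_m) (g : nat -> vec) y0 j :
  xseq H g y0 j.+2 - xseq H g y0 j.+1 = - Sf H g j - (g j.+2 - g j.+1).
Proof.
rewrite /xseq /=.
change (yseq H g y0 j - Sf H g j - g j.+2 - (yseq H g y0 j - g j.+1) =
  - Sf H g j - (g j.+2 - g j.+1)).
move: (yseq H g y0 j) (Sf H g j) (g j.+2) (g j.+1) => a b c e.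
by apply/rowP => k; rewrite !mxE; ring.
Qed.

Variable n : nat.
Variable H : 'M[R]_n.
Implicit Type v : nat -> R.

Lemma xdiffN (g : nat -> vec) y0 j : (j <= n)%N ->
  xseq H g y0 n.+1 - xseq H g y0 j.+1 =
  - \sum_(i < n | (j <= i)%N) Sf H g i - (g n.+1 - g j.+1).
Proof.
move=> jn; rewrite /xseq /= !yseqE.
have -> : \sum_(i < n) Sf H g i = \sum_(i < j) Sf H g i + \sum_(i < n | (j <= i)%N) Sf H g i.
  rewrite (bigID (fun i : 'I_n => (i < j)%N)) /=; congr (_ + _).
    by rewrite (big_ord_widen n (Sf H g) jn).
  by apply: eq_bigl => i; rewrite -leqNgt.
move: (\sum_(i < j) _) (\sum_(i < n | _) _) (g n.+1) (g j.+1) => a b c e.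
by apply/rowP => k; rewrite !mxE; ring.
Qed.

Lemma xNy0 (g : nat -> vec) y0 :
  xseq H g y0 n.+1 - y0 = - \sum_(i < n) Sf H g i - g n.+1.
Proof.
rewrite /xseq /= yseqE.
move: (\sum_(i < n) _) (g n.+1) => a c.
by apply/rowP => k; rewrite !mxE; ring.
Qed.

Definition diffP (u : nat -> R) tau (g : nat -> vec) y0 :=
  U_N (N := n.+1) H u g y0 - (tau * dot (g n.+1) (g n.+1) + dot (g n.+1) (xseq H g y0 n.+1 - y0)).

Lemma diffP_E u tau g y0 : diffP u tau g y0 =
  \sum_(i < n) (dot (Sf H g i) (u i.+1 *: (g i.+2 - g i.+1) + g n.+1)
     + u i.+1 * dot (g i.+2 - g i.+1) (g i.+2 - g i.+1))
  + (1 - tau) * dot (g n.+1) (g n.+1).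
Proof.
rewrite /diffP /U_N big_add1 /= big_mkord xNy0.
under eq_bigr => i _ do [idtac]. rewrite (eq_bigr (fun i : 'I_n => u i.+1 * dot (- Sf H g i - (g i.+2 - g i.+1)) (g i.+2 - g i.+1))); last by move=> i _; rewrite xdiff.
rewrite dotBr dotNr dot_sumr.
set q := dot (g n.+1) (g n.+1).
rewrite [in RHS](eq_bigr (fun i : 'I_n => dot (g n.+1) (Sf H g i) - u i.+1 * dot (- Sf H g i - (g i.+2 - g i.+1)) (g i.+2 - g i.+1)) ); last first.
  move=> i _; rewrite !(dotDr, dotDl, dotBl, dotBr, dotNl, dotNr, dotZl, dotZr).
  by rewrite (dotC (g n.+1)) (dotC (g i.+1) (g i.+2)); ring.
rewrite sumrB.
move: (\sum_(i < n) dot _ _) (\sum_(i < n) _ * _) => a b.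
ring.
Qed.


Lemma exch_tri (F : 'I_n -> 'I_n -> R) :
  \sum_(j < n) \sum_(i < n | (j <= i)%N) F i j =
  \sum_(i < n) \sum_(j < n | (j <= i)%N) F i j.
Proof. by rewrite (exchange_big_dep xpredT) //=. Qed.

Lemma widen_le (F : nat -> R) (i : 'I_n) :
  \sum_(j < i.+1) F j = \sum_(j < n | (j <= i)%N) F j.
Proof. by rewrite (big_ord_widen n F (ltn_ord i)); apply: eq_bigl => j; rewrite ltnS. Qed.

Definition Wd (v : nat -> R) (g : nat -> vec) k :=
  g n.+1 + \sum_(j < k) v j.+1 *: (g n.+1 - g j.+1).

Definition diffD v tau (g : nat -> vec) y0 :=
  - (tau * dot (g n.+1) (g n.+1)) - dot (g n.+1) (xseq H g y0 n.+1 - y0)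
  - V_0 (N := n.+1) H v g y0.

Lemma diffD_E v tau g y0 : diffD v tau g y0 =
  \sum_(i < n) dot (Sf H g i) (Wd v g i.+1)
  + \sum_(j < n) v j.+1 * dot (g n.+1 - g j.+1) (g n.+1 - g j.+1)
  + (1 - tau) * dot (g n.+1) (g n.+1).
Proof.
rewrite /diffD /V_0 /= big_mkord xNy0.
rewrite (eq_bigr (fun j : 'I_n => - \sum_(i < n | (j <= i)%N) dot (Sf H g i) (v j.+1 *: (g n.+1 - g j.+1)) - v j.+1 * dot (g n.+1 - g j.+1) (g n.+1 - g j.+1))); last first.
  move=> j _; rewrite xdiffN 1?ltnW // [in LHS]dotBl [in LHS]dotNl [in LHS]dot_suml.
  rewrite [in RHS](eq_bigr (fun i : 'I_n => v j.+1 * dot (Sf H g i) (g n.+1 - g j.+1))); last by move=> i _; rewrite dotZr.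
  rewrite -mulr_sumr.
  move: (\sum_(i < n | _) _) (dot (g n.+1 - g j.+1) _) => a b.
  ring.
rewrite sumrB sumrN exch_tri.
under [in RHS]eq_bigr => i _ do rewrite /Wd dotDr dot_sumr (widen_le (fun j => dot (Sf H g i) (v j.+1 *: (g n.+1 - g j.+1))) i).
rewrite big_split /= dotBr dotNr dot_sumr.
rewrite [in RHS](eq_bigr (fun i : 'I_n => dot (g n.+1) (Sf H g i))); last by move=> i _; rewrite dotC.
move: (\sum_(i < n) dot _ _) (\sum_(i < n) \sum_(j < n | _) _) (\sum_(i < n) _ * _) => a b c.
ring.
Qed.
End Primal.

Section Link.
Variable R : realFieldType.
Variable d : nat.
Notation vec := 'rV[R]_d.
Variable n : nat.

Lemma rev_le (a b : 'I_n) : (rev_ord b <= rev_ord a)%N = (a <= b)%N.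
Proof. rewrite /=; have := ltn_ord a; have := ltn_ord b; lia. Qed.

Lemma rev_tri (F : 'I_n -> 'I_n -> R) :
  \sum_(i < n) \sum_(j < n | (j <= i)%N) F i j =
  \sum_(i < n) \sum_(j < n | (j <= i)%N) F (rev_ord j) (rev_ord i).
Proof.
rewrite (reindex_inj rev_ord_inj) /=.
rewrite (eq_bigr (fun a : 'I_n => \sum_(b < n | (a <= b)%N) F (rev_ord a) (rev_ord b))); last first.
  move=> a _; rewrite (reindex_inj rev_ord_inj) /=.
  by apply: eq_bigl => b; rewrite rev_le.
exact: (exch_tri (fun b a => F (rev_ord a) (rev_ord b))).
Qed.

Variable H : 'M[R]_n.
Variables (u v : nat -> R) (tau : R).
Hypothesis huv : forall i, (i < n)%N -> u i.+1 * v (n - i)%N = 1.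

Definition gp (g : nat -> vec) b := Wd n v g (n.+1 - b).

Lemma gpN g : gp g n.+1 = g n.+1.
Proof. by rewrite /gp subnn /Wd big_ord0 addr0. Qed.

Lemma Dform g i : (i < n)%N ->
  gp g i.+2 - gp g i.+1 = - (v (n - i)%N *: (g n.+1 - g (n - i)%N)).
Proof.
move=> ilt; rewrite /gp !subSS -(subnSK ilt) /Wd big_ord_recr /=.
move: (\sum_(j < _) _) (v _ *: _) => a b.
by apply/rowP => k; rewrite !mxE; ring.
Qed.

Lemma link g y0 y1 :
  diffD (antiT H) v tau g y0 = diffP H u tau (gp g) y1.
Proof.
rewrite diffD_E diffP_E gpN big_split /=.
rewrite [in RHS](eq_bigr (fun i : 'I_n => dot (Sf H (gp g) i) (g (n - i)%N))); last first.
  move=> i _; congr (dot _ _); rewrite Dform // scalerN scalerA huv // scale1r.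
  move: (g n.+1) (g (n - i)%N) => a b.
  by apply/rowP => k; rewrite !mxE; ring.
rewrite [X in _ = _ + X + _](eq_bigr (fun i : 'I_n => v (n - i)%N * dot (g n.+1 - g (n - i)%N) (g n.+1 - g (n - i)%N))); last first.
  move=> i _; rewrite Dform // dotNl dotNr !dotZl !dotZr.
  have := huv (ltn_ord i).
  move: (u _) (v _) (dot _ _) => a b c e.
  by rewrite opprK mulrA e mul1r.
congr (_ + _ + _).
  rewrite (eq_bigr (fun i : 'I_n => \sum_(j < n | (j <= i)%N) (antiT H i j * 2) * dot (g j.+1) (Wd n v g i.+1))); last first.
    by move=> i _; rewrite SfE dot_suml; apply: eq_bigr => j _; rewrite dotZl.
  rewrite [in RHS](eq_bigr (fun i : 'I_n => \sum_(j < n | (j <= i)%N) (H i j * 2) * dot (gp g j.+1) (g (n - i)%N))); last first.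
    by move=> i _; rewrite SfE dot_suml; apply: eq_bigr => j _; rewrite dotZl.
  rewrite [LHS]rev_tri; apply: eq_bigr => i _; apply: eq_bigr => j _.
  by rewrite mxE !rev_ordK /= /gp subSS !subnSK // dotC.
rewrite [RHS](reindex_inj rev_ord_inj) /=.
by apply: eq_bigr => i _; rewrite subKn.
Qed.
End Link.

Section Inv.
Variable R : realFieldType.
Variable d : nat.
Notation vec := 'rV[R]_d.
Variable n : nat.
Variables (u v : nat -> R) (tau : R).
Hypothesis huv : forall i, (i < n)%N -> u i.+1 * v (n - i)%N = 1.

Lemma Sf_ext (H : 'M[R]_n) (g1 g2 : nat -> vec) i :
  (forall j, (j <= i)%N -> g1 j.+1 = g2 j.+1) -> Sf H g1 i = Sf H g2 i.
Proof. by move=> e; apply: eq_bigr => j _; rewrite e // -ltnS. Qed.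

Lemma diffP_ext (H : 'M[R]_n) (g1 g2 : nat -> vec) y0 :
  (forall b, (0 < b <= n.+1)%N -> g1 b = g2 b) ->
  diffP H u tau g1 y0 = diffP H u tau g2 y0.
Proof.
move=> e; rewrite !diffP_E (e n.+1); last by lia.
congr (_ + _).
apply: eq_bigr => i _.
have hi := ltn_ord i.
rewrite (@Sf_ext H g1 g2 i); last by move=> j ji; apply: e; lia.
by rewrite (e i.+1) ?(e i.+2) //; lia.
Qed.

Definition ginv (g : nat -> vec) m :=
  if (m < n.+1)%N then g n.+1 - u (n.+1 - m)%N *: (g (n.+1 - m)%N - g (n.+2 - m)%N)
  else g n.+1.

Lemma Wd_inv g k : (k <= n)%N -> Wd n v (ginv g) k = g (n.+1 - k)%N.
Proof.
elim: k => [|k IH] kn.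
  by rewrite /Wd big_ord0 addr0 /ginv ltnn subn0.
rewrite /Wd big_ord_recr /= addrA.
have -> : ginv g n.+1 + \sum_(i < k) v i.+1 *: (ginv g n.+1 - ginv g i.+1) = g (n.+1 - k)%N.
  by apply: IH; exact: ltnW.
rewrite /ginv ltnn ltnS kn.
have e1 : (n.+1 - k.+1 = n - k)%N by rewrite subSS.
have e2 : (n.+2 - k.+1 = n.+1 - k)%N by rewrite subSS.
rewrite e1 e2.
have := huv (i := (n - k.+1)%N) ltac:(lia).
have -> : (n - k.+1).+1 = (n - k)%N by lia.
have -> : (n - (n - k.+1) = k.+1)%N by lia.
move=> h.
have -> : g n.+1 - (g n.+1 - u (n - k)%N *: (g (n - k)%N - g (n.+1 - k)%N)) =
   u (n - k)%N *: (g (n - k)%N - g (n.+1 - k)%N).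
  by move: (g n.+1) (u _ *: _) => a b; apply/rowP => j; rewrite !mxE; ring.
rewrite scalerA mulrC h scale1r.

by move: (g (n - k)%N) (g (n.+1 - k)%N) => a b; apply/rowP => j; rewrite !mxE; ring.
Qed.

Lemma gp_inv g b : (0 < b <= n.+1)%N -> gp n v (ginv g) b = g b.
Proof.
move=> hb; rewrite /gp Wd_inv; last by lia.
by congr g; lia.
Qed.
End Inv.

Unset Implicit Arguments.
Theorem theoremD1 (R : realFieldType) (d N : nat) (u v : nat -> R)
    (H : 'M[R]_N.-1) (tau : R) :
  (2 <= N)%N ->
  (forall j, (1 <= j <= N.-1)%N -> 0 < u j) ->
  (forall j, (1 <= j <= N.-1)%N -> 0 < v j) ->
  (forall j, (1 <= j <= N.-1)%N -> v j = 1 / u (N - j)%N) ->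
  is_trig_mx H ->
  0 < tau ->
  (primal_cond d H u tau <-> dual_cond d (antiT H) v tau).
Proof.
case: N H => [|n] H // hN hu _ hv _ _ /=.
have huv : forall i, (i < n)%N -> u i.+1 * v (n - i)%N = 1.
  move=> i hi; rewrite hv /=; last by lia.
  have -> : (n.+1 - (n - i) = i.+1)%N by lia.
  rewrite div1r mulfV //; apply: lt0r_neq0; apply: hu; lia.
split.
- move=> P g y0.
  rewrite -subr_ge0.
  have := P (gp n v g) y0; rewrite -subr_ge0.
  change (0 <= diffP H u tau (gp n v g) y0 -> 0 <= diffD (antiT H) v tau g y0).
  by rewrite (link H tau huv g y0 y0).
- move=> P g y0.
  rewrite -subr_ge0.
  have := P (ginv n u g) y0; rewrite -subr_ge0.
  change (0 <= diffD (antiT H) v tau (ginv n u g) y0 -> 0 <= diffP H u tau g y0).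
  rewrite (link H tau huv (ginv n u g) y0 y0).
  rewrite (diffP_ext u tau H (g1 := gp n v (ginv n u g)) (g2 := g)) //.
  by move=> b hb; apply: gp_inv.
Qed.
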